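(* Let $\Sigma=(X,U,F)$ be a system and $Q\subset X$ be controlled invariant. For every quasi-invariant-partition $(\mathcal{A},G)$ of $Q$ there exists an invariant partition $(\mathcal{A}',G')$ of $Q$ such that $\sharp\mathcal{A}=\sharp\mathcal{A}'$ and $h_{inv}(\mathcal{A}',G')\le h_{inv}(\mathcal{A},G)$.
   Context: A system is a triple $\Sigma=(X,U,F)$ where $X,U$ are nonempty sets and $F:X\times U\rightrightarrows X$ is a set-valued map with $F(x,u)\neq\emptyset$ for all $(x,u)$; for $A\subset X$, $F(A,u)=\bigcup_{x\in A}F(x,u)$. $Q\subset X$ is controlled invariant if for every $x\in Q$ there is $u\in U$ with $F(x,u)\subset Q$. An invariant cover of $Q$ is a pair $(\mathcal{A},G)$ where $\mathcal{A}$ is a finite cover of $Q$ (by subsets of $Q$) and $G:\mathcal{A}\to U$ satisfies $F(A,G(A))\subset Q$ for all $A\in\mathcal{A}$. For $\mathcal{S}\subset\mathcal{A}^n$, $\alpha=\alpha(0)\cdots\alpha(n-1)\in\mathcal{S}$ and integer $0\le t<n-1$, let $P(\alpha|_{[0,t]})=\{A\in\mathcal{A}:\exists\hat\alpha\in\mathcal{S},\ \hat\alpha|_{[0,t]}=\alpha|_{[0,t]},\ A=\hat\alpha(t+1)\}$, and $P(\alpha|_{[0,n-1]})=P(\alpha)=\{\hat\alpha(0):\hat\alpha\in\mathcal{S}\}$. $\mathcal{S}$ is $(n,Q)$-spanning in $(\mathcal{A},G)$ if (1) the elements of $P(\alpha)$ cover $Q$, and (2) for every $\alpha\in\mathcal{S}$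 and $0\le t<n-1$, $F(\alpha(t),G(\alpha(t)))\subset\bigcup_{A'\in P(\alpha|_{[0,t]})}A'$. Let $N(\mathcal{S})=\max_{\alpha\in\mathcal{S}}\prod_{t=0}^{n-1}\sharp P(\alpha|_{[0,t]})$, $r_{inv}(n,Q,\mathcal{A},G)=\min\{N(\mathcal{S}):\mathcal{S}\ (n,Q)\text{-spanning in }(\mathcal{A},G)\}$, and $h_{inv}(\mathcal{A},G)=\lim_{n\to\infty}\frac1n\log r_{inv}(n,Q,\mathcal{A},G)$ ($\log$ base $2$). For $A\in\mathcal{A}$: $D(A)=\{A'\in\mathcal{A}:F(A,G(A))\cap A'\neq\emptyset\}$. An invariant cover $(\mathcal{A},G)$ is a quasi-invariant-partition of $Q$ if $A\setminus\bigcup_{B\in\mathcal{A},B\neq A}B\neq\emptyset$ for all $A\in\mathcal{A}$, and $F(A,G(A))\cap\big(B\setminus\bigcup_{C\in D(A),C\neq B}C\big)\neq\emptyset$ for all $A\in\mathcal{A}$ and $B\in D(A)$. It is an invariant partition of $Q$ if $\mathcal{A}$ is a partition of $Q$. *)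

(* Defs.v *)
From HB Require Import structures.
From mathcomp Require Import all_boot all_order all_algebra.
From mathcomp Require Import all_classical all_reals all_analysis.
From Stdlib Require List.
Set Implicit Arguments. Unset Strict Implicit. Unset Printing Implicit Defensive.
Import Order.TTheory GRing.Theory Num.Theory.
Import numFieldNormedType.Exports.
Local Open Scope classical_set_scope.

Section Defs.
Variables (X U : Type) (F : X -> U -> set X) (Q : set X).

Definition controlled_invariant : Prop :=
  forall x, Q x -> exists u, F x u `<=` Q.

Definition Fset (A : set X) (u : U) : set X := \bigcup_(x in A) F x u.

(* A finite family of subsets of X, represented by a duplicate-free list. *)
Definition inA (cA : seq (set X)) : set (set X) := [set A | List.In A cA].

Definition invariant_cover (cA : seq (set X)) (G : set X -> U) : Prop :=
  [/\ List.NoDup cA,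
      (forall A, List.In A cA -> A `<=` Q),
      Q `<=` \bigcup_(A in inA cA) A &
      (forall A, List.In A cA -> Fset A (G A) `<=` Q)].

Definition Dset (cA : seq (set X)) (G : set X -> U) (A : set X) : set (set X) :=
  [set A' | List.In A' cA /\ Fset A (G A) `&` A' !=set0].

Definition quasi_invariant_partition (cA : seq (set X)) (G : set X -> U) : Prop :=
  [/\ invariant_cover cA G,
      (forall A, List.In A cA ->
         A `\` \bigcup_(B in [set B | List.In B cA /\ B <> A]) B !=set0) &
      (forall A B, List.In A cA -> Dset cA G A B ->
         Fset A (G A) `&`
           (B `\` \bigcup_(C in [set C | Dset cA G A C /\ C <> B]) C) !=set0)].

Definition invariant_partition (cA : seq (set X)) (G : set X -> U) : Prop :=
  [/\ invariant_cover cA G,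
      (forall A, List.In A cA -> A !=set0) &
      (forall A B, List.In A cA -> List.In B cA -> A <> B -> A `&` B = set0)].

Definition cardP (cA : seq (set X)) (P : set (set X)) : nat :=
  size (seq.filter (fun A => `[< P A >]) cA).

Section Spanning.
Variables (cA : seq (set X)) (G : set X -> U) (n : nat).

Definition Pt (S : set (seq (set X))) (a : seq (set X)) (t : nat) : set (set X) :=
  [set A | List.In A cA /\ exists b, S b /\ take t.+1 b = take t.+1 a
                                    /\ A = nth set0 b t.+1].

Definition Pfull (S : set (seq (set X))) : set (set X) :=
  [set A | List.In A cA /\ exists b, S b /\ A = nth set0 b 0].

Definition Pidx (S : set (seq (set X))) (a : seq (set X)) (t : nat) : set (set X) :=
  if t == n.-1 then Pfull S else Pt S a t.

Definition spanning (S : set (seq (set X))) : Prop :=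
  [/\ (forall a, S a -> size a = n /\ forall A, List.In A a -> List.In A cA),
      Q `<=` \bigcup_(A in Pfull S) A &
      (forall a t, S a -> (t < n.-1)%N ->
         Fset (nth set0 a t) (G (nth set0 a t)) `<=` \bigcup_(A in Pt S a t) A)].

Definition prodP (S : set (seq (set X))) (a : seq (set X)) : nat :=
  (\prod_(t < n) cardP cA (Pidx S a t))%N.

(* N(S) = max over alpha in S (0 if S is empty) *)
Definition NS (S : set (seq (set X))) : nat :=
  xget 0%N [set k | (exists a, S a /\ k = prodP S a) /\
                    forall a, S a -> (prodP S a <= k)%N].

Definition r_inv : nat :=
  xget 0%N [set k | (exists S, spanning S /\ k = NS S) /\
                    forall S, spanning S -> (k <= NS S)%N].
End Spanning.

Definition h_inv (R : realType) (cA : seq (set X)) (G : set X -> U) : R :=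
  limn ((fun n : nat => (ln ((r_inv cA G n)%:R : R) / ln 2 / n%:R)%R) : R^nat).

End Defs.

(* Main.v *)
Require Import Defs.
From HB Require Import structures.
From mathcomp Require Import all_boot all_order all_algebra.
From mathcomp Require Import all_classical all_reals all_analysis.
From Stdlib Require List.
From Stdlib Require Import Classical.
From mathcomp Require Import zify ring lra.
Import Order.TTheory GRing.Theory Num.Theory.
Local Open Scope classical_set_scope.
Set Implicit Arguments. Unset Strict Implicit. Unset Printing Implicit Defensive.
Import numFieldNormedType.Exports.
Section Lists.
Variable T : Type.

Fixpoint maxl (P : set T) (f : T -> nat) (l : seq T) : nat :=
  match l with
  | [::] => 0%N
  | A :: l' => if `[< P A >] then maxn (f A) (maxl P f l') else maxl P f l'
  end.

Lemma maxl_ge P f l A : List.In A l -> P A -> (f A <= maxl P f l)%N.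
Proof.
elim: l => //= B l IH [<-|H] PA.
  by rewrite asboolT // leq_maxl.
case: asboolP => _; last exact: IH.
exact: leq_trans (IH H PA) (leq_maxr _ _).
Qed.

Lemma maxl_le P f l c : (forall A, List.In A l -> P A -> (f A <= c)%N) ->
  (maxl P f l <= c)%N.
Proof.
elim: l => //= B l IH H.
have H' : forall A, List.In A l -> P A -> (f A <= c)%N.
  by move=> A HA; apply: H; right.
case: asboolP => PB; last exact: IH.
by rewrite geq_max H //; [exact: IH|left].
Qed.

Lemma maxl_ex P f l : (exists A, List.In A l /\ P A) ->
  exists A, [/\ List.In A l, P A & f A = maxl P f l].
Proof.
elim: l => [[A [] //]|B l IH] /= [A [HA PA]].
case: (classic (exists A, List.In A l /\ P A)) => [ex|nex].
  have [A' [HA' PA' fA']] := IH ex.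
  case: asboolP => PB; last by exists A'; split; [right|done|done].
  have [le|lt] := leqP (maxl P f l) (f B).
    by exists B; split; [left|done|].
  by exists A'; split; [right|done|].
have m0 : maxl P f l = 0%N.
  apply/eqP; rewrite -leqn0; apply: maxl_le => A' HA' PA'.
  by exfalso; apply: nex; exists A'.
case: HA => [EB|HA]; last by exfalso; apply: nex; exists A.
subst B; exists A; split => //; first by left.
by rewrite asboolT // m0 maxn0.
Qed.

Lemma size_filter_sub (l : seq T) (p q : pred T) :
  (forall A, List.In A l -> p A -> q A) -> (size (seq.filter p l) <= size (seq.filter q l))%N.
Proof.
elim: l => //= B l IH H.
have H' : forall A, List.In A l -> p A -> q A by move=> A HA; apply: H; right.
case: ifP => pB; first by rewrite H //=; [exact: IH|left].
case: (q B) => /=; last exact: IH.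
exact: leq_trans (IH H') (leqnSn _).
Qed.

Lemma size_filter_all (l : seq T) (p : pred T) :
  (forall A, List.In A l -> p A) -> size (seq.filter p l) = size l.
Proof.
elim: l => //= B l IH H.
by rewrite H /=; [rewrite IH // => A HA; apply: H; right|left].
Qed.

Lemma size_filter_pos (l : seq T) (p : pred T) (A : T) :
  List.In A l -> p A -> (0 < size (seq.filter p l))%N.
Proof.
elim: l => //= B l IH [<-|HA] pA; first by rewrite pA.
by case: (p B) => //=; exact: IH.
Qed.

Lemma In_nth (l : seq T) i (x0 : T) : (i < size l)%N -> List.In (nth x0 l i) l.
Proof.
elim: l i => //= B l IH [|i] /= Hi; first by left.
by right; apply: IH.
Qed.

Lemma In_take k (l : seq T) (A : T) : List.In A (take k l) -> List.In A l.
Proof.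
elim: l k => //= B l IH [|k] //= [->|H]; first by left.
by right; exact: IH H.
Qed.

Lemma In_cat (l1 l2 : seq T) (A : T) : List.In A (l1 ++ l2) -> List.In A l1 \/ List.In A l2.
Proof.
elim: l1 => /= [|B l1 IH]; first by right.
by case=> [->|/IH [H|H]]; [left; left|left; right|right].
Qed.

End Lists.

Lemma In_map_inv (S T : Type) (f : S -> T) (l : seq S) (y : T) :
  List.In y (map f l) -> exists x, List.In x l /\ f x = y.
Proof.
elim: l => //= x l IH [<-|H]; first by exists x; split => //; left.
by have [z [Hz <-]] := IH H; exists z; split => //; right.
Qed.

Lemma In_map_f (S T : Type) (f : S -> T) (l : seq S) (x : S) :
  List.In x l -> List.In (f x) (map f l).
Proof. by elim: l => //= z l IH [->|H]; [left|right; apply: IH]. Qed.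

Lemma NoDup_map_inj (S T : Type) (f : S -> T) (l : seq S) :
  List.NoDup l -> (forall x y, List.In x l -> List.In y l -> f x = f y -> x = y) ->
  List.NoDup (map f l).
Proof.
elim: l => [|x l IH] /= Hnd Hinj; first exact: List.NoDup_nil.
have /List.NoDup_cons_iff [Hx Hl] := Hnd.
apply: List.NoDup_cons.
  move=> Hfx; have [z [Hz Ez]] := In_map_inv Hfx; apply: Hx.
  by rewrite -(Hinj z x) //; [right|left].
apply: IH => // a b Ha Hb; apply: Hinj; by right.
Qed.
Section Frame.
Variables (X U : Type) (F : X -> U -> set X) (Q : set X) (cA : seq (set X)) (G : set X -> U).
Local Notation D := (Dset F cA G).

Definition deg (A : set X) : nat := cardP cA (D A).

Fixpoint Z (j : nat) (A : set X) : nat :=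
  match j with 0 => 1%N | j'.+1 => (deg A * maxl (D A) (Z j') cA)%N end.

Definition maxZ j := maxl setT (Z j) cA.

Lemma DIn A B : D A B -> List.In B cA.
Proof. by case. Qed.

Lemma cardP_le P : (cardP cA P <= size cA)%N.
Proof. by rewrite /cardP size_filter count_size. Qed.

Lemma deg_le A : (deg A <= size cA)%N.
Proof. exact: cardP_le. Qed.

Lemma maxZ_ge j A : List.In A cA -> (Z j A <= maxZ j)%N.
Proof. by move=> HA; apply: maxl_ge. Qed.

Lemma Z_mulr i j A : List.In A cA -> (Z (i + j) A <= Z i A * maxZ j)%N.
Proof.
elim: i A => [|i IH] A HA; first by rewrite add0n mul1n maxZ_ge.
rewrite addSn /= -mulnA leq_mul2l; apply/orP; right.
apply: maxl_le => B HB DB; apply: leq_trans (IH B HB) _.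
by rewrite leq_mul2r maxl_ge ?orbT.
Qed.

Lemma maxZ_sub i j : (maxZ (i + j) <= maxZ i * maxZ j)%N.
Proof.
apply: maxl_le => A HA _; apply: leq_trans (Z_mulr i j HA) _.
by rewrite leq_mul2r maxZ_ge ?orbT.
Qed.

Lemma maxZ_S j : (maxZ j.+1 <= size cA * maxZ j)%N.
Proof.
apply: maxl_le => A HA _ /=; apply: leq_mul; first exact: deg_le.
by apply: maxl_le => B HB _; exact: maxZ_ge.
Qed.

Hypothesis HDne : forall A, List.In A cA -> exists B, D A B.

Lemma deg_pos A : List.In A cA -> (0 < deg A)%N.
Proof.
move=> HA; have [B DB] := HDne HA.
by apply: (size_filter_pos (DIn DB)); apply/asboolP.
Qed.

Lemma Z_pos j A : List.In A cA -> (0 < Z j A)%N.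
Proof.
elim: j A => [//|j IH] A HA /=; rewrite muln_gt0 deg_pos //=.
have [B DB] := HDne HA.
exact: leq_trans (IH B (DIn DB)) (maxl_ge _ (DIn DB) DB).
Qed.

Lemma maxZ_pos j : cA <> [::] -> (0 < maxZ j)%N.
Proof.
move=> ne; have [A HA] : exists A, List.In A cA.
  by case: cA ne => [//|A l] _; exists A; left.
exact: leq_trans (Z_pos j HA) (maxZ_ge j HA).
Qed.

Definition pathP n (a : seq (set X)) : Prop :=
  [/\ size a = n, (forall A, List.In A a -> List.In A cA) &
      forall t, (t.+1 < n)%N -> D (nth set0 a t) (nth set0 a t.+1)].

Definition pw (a : seq (set X)) m := (\prod_(t < m) deg (nth set0 a t))%N.

Lemma pathP_cons n A a : pathP n.+2 (A :: a) ->
  [/\ pathP n.+1 a, D A (nth set0 a 0) & List.In A cA].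
Proof.
case=> [/= [sa] Hin Hadj]; split; [split => // | |].
- by move=> B HB; apply: Hin; right.
- by move=> t Ht; apply: (Hadj t.+1).
- exact: (Hadj 0).
- by apply: Hin; left.
Qed.

Lemma pw_cons A a j : pw (A :: a) j.+1 = (deg A * pw a j)%N.
Proof.
by rewrite /pw big_ord_recl.
Qed.

Lemma path_le j a : pathP j.+1 a -> (pw a j <= Z j (nth set0 a 0))%N.
Proof.
elim: j a => [|j IH] a Ha; first by rewrite /pw big_ord0.
case: a Ha => [|A a] Ha; first by case: Ha.
have [Ha' DA HA] := pathP_cons Ha.
rewrite pw_cons /=; apply: leq_mul => //.
apply: leq_trans (IH a Ha') _.
exact: maxl_ge (DIn DA) DA.
Qed.

Lemma path_ex j A : List.In A cA ->
  exists a, [/\ pathP j.+1 a, nth set0 a 0 = A & pw a j = Z j A].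
Proof.
elim: j A => [|j IH] A HA.
  exists [:: A]; split; [|done|by rewrite /pw big_ord0].
  by split => // B [<-|].
have ex : exists B, List.In B cA /\ D A B.
  by have [B DB] := HDne HA; exists B; split => //; exact: DIn DB.
have [B [HB DB EB]] := maxl_ex (Z j) ex.
have [a [Ha a0 pa]] := IH B HB.
exists (A :: a); split; [|done|by rewrite pw_cons pa EB].
case: Ha => sa Hin Hadj; split; first by rewrite /= sa.
  by move=> C /= [<-|HC] //; apply: Hin.
by move=> [|t] Ht /=; [rewrite a0 | apply: Hadj].
Qed.

Lemma path_ext n a t B : pathP n a -> (t.+1 < n)%N -> D (nth set0 a t) B ->
  exists b, [/\ pathP n b, take t.+1 b = take t.+1 a & nth set0 b t.+1 = B].
Proof.
move=> Ha Htn DB; case: Ha => sa Hin Hadj.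
have [c [[sc Hinc Hadjc] c0 _]] := path_ex (n - t.+2) (DIn DB).
have st : size (take t.+1 a) = t.+1 by rewrite size_takel // sa ltnW.
exists (take t.+1 a ++ c); split.
- split; first by rewrite size_cat st sc; lia.
  + move=> C HC; case: (In_cat HC) => HC'; [exact/Hin/(In_take HC')|exact: Hinc].
  + move=> i Hi; rewrite !nth_cat st.
    have [i1|i1] := ltnP i.+1 t.+1.
      rewrite ifT; last by lia.
      rewrite !nth_take //; [exact: Hadj|lia].
    have [ieq|ilt] := eqVneq i t.
      subst i; rewrite ltnSn subnn c0 nth_take //.
    rewrite ifF; last by lia.
    have -> : (i.+1 - t.+1 = (i - t.+1).+1)%N by lia.
    apply: Hadjc; lia.
- exact: take_size_cat.
- by rewrite nth_cat st ltnn subnn.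
Qed.

Hypothesis HsubQ : forall A, List.In A cA -> A `<=` Q.
Hypothesis Hcov : Q `<=` \bigcup_(A in inA cA) A.
Hypothesis HFQ : forall A, List.In A cA -> Fset F A (G A) `<=` Q.
Hypothesis Hpriv : forall A, List.In A cA ->
  exists p, A p /\ forall B, List.In B cA -> B p -> B = A.
Hypothesis HDpriv : forall A B, List.In A cA -> D A B ->
  exists x, [/\ Fset F A (G A) x, B x & forall C, List.In C cA -> C x -> C = B].

Lemma Pfull_all n S : spanning F Q cA G n S -> forall A, List.In A cA -> Pfull cA S A.
Proof.
case=> _ HQ _ A HA.
have [p [Ap Hp]] := Hpriv HA.
have [A' PA' A'p] := HQ p (HsubQ HA Ap).
by rewrite -(Hp A' PA'.1 A'p).
Qed.

Lemma Pt_sup n S a t B : spanning F Q cA G n S -> S a -> (t < n.-1)%N ->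
  D (nth set0 a t) B -> Pt cA S a t B.
Proof.
case=> Hs _ H3 Sa Ht DB.
have Hat : List.In (nth set0 a t) cA.
  apply: (Hs a Sa).2; apply: In_nth; rewrite (Hs a Sa).1; lia.
have [x [Fx Bx Hx]] := HDpriv Hat DB.
have [A' PA' A'x] := H3 a t Sa Ht x Fx.
by rewrite -(Hx A' PA'.1 A'x).
Qed.

Lemma paths_in n S a : (0 < n)%N -> spanning F Q cA G n S -> pathP n a -> S a.
Proof.
move=> n0 Sp Pa.
have Sp' := Sp; case: Sp' => Hs _ _.
case: (Pa) => sa Hin Hadj.
suff: forall t, (t < n)%N -> exists b, S b /\ take t.+1 b = take t.+1 a.
  move=> H; have [b [Sb Eb]] := H n.-1 (ltac:(lia) : (n.-1 < n)%N).
  rewrite prednK // in Eb.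
  have sb := (Hs b Sb).1.
  suff -> : a = b by [].
  by move: Eb; rewrite -{1}sb take_size => ->; rewrite -{1}sa take_size.
have tk : forall s : seq (set X), (0 < size s)%N -> take 1 s = [:: nth set0 s 0].
  by case=> // x s' _; rewrite /= take0.
elim=> [|t IH] Ht.
  have Ha0 : List.In (nth set0 a 0) cA by apply/Hin/In_nth; rewrite sa.
  have [_ [b [Sb Eb]]] := Pfull_all Sp Ha0.
  exists b; split => //.
  by rewrite !tk ?Eb // ?sa ?(Hs b Sb).1.
have [b [Sb Eb]] := IH (ltnW Ht).
have Ebt : nth set0 b t = nth set0 a t.
  by have := congr1 (nth set0 ^~ t) Eb; rewrite !nth_take.
have DB := Hadj t Ht.
rewrite -Ebt in DB.
have Htn : (t < n.-1)%N by lia.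
have [_ [b' [Sb' [Eb' Eb'']]]] := Pt_sup Sp Sb Htn DB.
exists b'; split => //.
have sb' := (Hs b' Sb').1.
rewrite (take_nth set0 (_ : t.+1 < size b')%N); last by rewrite sb'.
rewrite (take_nth set0 (_ : t.+1 < size a)%N); last by rewrite sa.
by rewrite Eb' Eb -Eb''.
Qed.

Lemma prodP_split m S a : prodP cA m.+1 S a =
  (\prod_(t < m) cardP cA (Pt cA S a t) * cardP cA (Pfull cA S))%N.
Proof.
rewrite /prodP big_ord_recr /= /Pidx eqxx; congr (_ * _)%N.
by apply: eq_bigr => i _; rewrite /= ltn_eqF.
Qed.

Lemma NS_spec n S a0 : S a0 ->
  (exists a, S a /\ NS cA n S = prodP cA n S a) /\
  forall a, S a -> (prodP cA n S a <= NS cA n S)%N.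
Proof.
move=> Sa0.
suff ex : exists k, (exists a, S a /\ k = prodP cA n S a) /\
    forall a, S a -> (prodP cA n S a <= k)%N.
  have := xgetPex 0%N ex; rewrite /NS => -[[a [Sa ->]] H].
  by split; [exists a|].
pose Pb := fun k => `[< exists a, S a /\ k = prodP cA n S a >].
have exP : exists i, Pb i by exists (prodP cA n S a0); apply/asboolP; exists a0.
have ubP : forall i, Pb i -> (i <= \prod_(t < n) size cA)%N.
  move=> i /asboolP [a [_ ->]]; apply: leq_prod => t _; exact: cardP_le.
case: (ex_maxnP exP ubP) => i /asboolP Pi Hmax.
exists i; split => // a Sa; apply: Hmax; apply/asboolP; by exists a.
Qed.


Lemma cA_ex : cA <> [::] -> exists A, List.In A cA.
Proof. by case: cA => [//|A l] _; exists A; left. Qed.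

Lemma NS_lower m S : cA <> [::] -> spanning F Q cA G m.+1 S ->
  (size cA * maxZ m <= NS cA m.+1 S)%N.
Proof.
move=> ne Sp.
have [A0 HA0] := cA_ex ne.
have [As [HAs _ EAs]] := maxl_ex (Z m) (ex_intro _ A0 (conj HA0 I) : exists A, List.In A cA /\ setT A).
have [a [Pa a0 pa]] := path_ex m HAs.
have Sa := paths_in (ltn0Sn m) Sp Pa.
have [_ Hmax] := NS_spec m.+1 Sa.
apply: leq_trans (Hmax a Sa); rewrite prodP_split mulnC.
rewrite /maxZ -EAs -pa; apply: leq_mul.
  apply: leq_prod => t _; apply: size_filter_sub => B HB /asboolP DB; apply/asboolP.
  exact: Pt_sup Sp Sa (ltn_ord t) DB.
rewrite /cardP size_filter_all // => A HA; apply/asboolP; exact: Pfull_all Sp A HA.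
Qed.

Lemma S0_spanning m : spanning F Q cA G m.+1 (pathP m.+1).
Proof.
split.
- by move=> a [sa Hin _].
- move=> x Qx; have [A HA Ax] := Hcov Qx.
  have [a [Pa a0 _]] := path_ex m HA.
  by exists A => //; split => //; exists a.
- move=> a t Pa Ht x Fx.
  case: (Pa) => sa Hin Hadj.
  have Hat : List.In (nth set0 a t) cA by apply/Hin/In_nth; rewrite sa; lia.
  have [B HB Bx] := Hcov (HFQ Hat Fx).
  have DB : D (nth set0 a t) B by split => //; exists x.
  have [b [Pb Eb Eb']] := path_ext Pa (ltac:(lia) : (t.+1 < m.+1)%N) DB.
  by exists B => //; split => //; exists b.
Qed.

Lemma NS_upper m : cA <> [::] -> (NS cA m.+1 (pathP m.+1) <= size cA * maxZ m)%N.
Proof.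
move=> ne; have [A0 HA0] := cA_ex ne.
have [a0 [Pa0 _ _]] := path_ex m HA0.
have [[a [Pa ->]] _] := NS_spec m.+1 Pa0.
rewrite prodP_split mulnC; apply: leq_mul; first exact: cardP_le.
have Ha0 : List.In (nth set0 a 0) cA by case: Pa => sa Hin _; apply/Hin/In_nth; rewrite sa.
apply: leq_trans (maxZ_ge m Ha0); apply: leq_trans (path_le Pa).
apply: leq_prod => t _; apply: size_filter_sub => B HB /asboolP PB; apply/asboolP.
case: PB => _ [b [Pb [Eb ->]]].
have Ebt : nth set0 b t = nth set0 a t.
  by have := congr1 (nth set0 ^~ t) Eb; rewrite !nth_take.
case: Pb => _ _ Hadj; rewrite -Ebt; apply: Hadj; rewrite ltnS; exact: ltn_ord.
Qed.

Lemma r_inv_eq m : cA <> [::] -> r_inv F Q cA G m.+1 = (size cA * maxZ m)%N.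
Proof.
move=> ne.
pose Pb := fun k => `[< exists S, spanning F Q cA G m.+1 S /\ k = NS cA m.+1 S >].
have exP : exists i, Pb i.
  by exists (NS cA m.+1 (pathP m.+1)); apply/asboolP; exists (pathP m.+1); split => //; exact: S0_spanning.
have ex : exists k, (exists S, spanning F Q cA G m.+1 S /\ k = NS cA m.+1 S) /\
    forall S, spanning F Q cA G m.+1 S -> (k <= NS cA m.+1 S)%N.
  case: (ex_minnP exP) => i /asboolP Pi Hmin.
  exists i; split => // S Sp; apply: Hmin; apply/asboolP; by exists S.
have := xgetPex 0%N ex; rewrite /r_inv => -[[S [Sp ->]] H].
apply/eqP; rewrite eqn_leq NS_lower // andbT.
apply: leq_trans (NS_upper m ne); apply: H; exact: S0_spanning.
Qed.

End Frame.

Section Fekete.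
Variable R : realType.
Local Open Scope ring_scope.
Variable v : nat -> R.
Hypothesis v_ge0 : forall n, 0 <= v n.
Hypothesis v_sub : forall n m, (0 < n)%N -> (0 < m)%N -> v (n + m)%N <= v n + v m.

Lemma v_sub' m a : (0 < m)%N -> v (m + a)%N <= v m + v a.
Proof. move=> m0; case: a => [|a]; first by rewrite addn0 lerDl. exact: v_sub. Qed.

Lemma v_dec m q r : (0 < m)%N -> v (q * m + r)%N <= q%:R * v m + v r.
Proof.
move=> m0; elim: q => [|q IH]; first by rewrite mul0n add0n mul0r add0r.
rewrite mulSn -addnA; apply: le_trans (v_sub' _ m0) _.
rewrite -[q.+1]addn1 natrD mulrDl mul1r.
have := v_ge0 m; lra.
Qed.

Lemma fekete : cvgn ((fun n => v n / n%:R) : R^nat).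
Proof.
set u := fun n => _.
pose E := [set x : R | exists2 n, (0 < n)%N & x = u n].
have hlb : has_lbound E.
  by exists 0 => x [n n0 ->]; rewrite /u divr_ge0.
have hE : has_inf E by split => //; exists (u 1%N); exists 1%N.
apply/cvg_ex; exists (inf E); apply/cvgrPdist_lt => e e0.
have e20 : 0 < e / 2 by rewrite divr_gt0.
have [x [m m0 ->] Hm] := inf_adherent e20 hE.
pose C := \sum_(r < m) v r.
have C0 : 0 <= C by rewrite sumr_ge0.
have HC : forall r, (r < m)%N -> v r <= C.
  move=> r rm; rewrite /C (bigD1 (Ordinal rm)) //= lerDl sumr_ge0 //.
have HN := archi_boundP (divr_ge0 C0 (ltW e20)).
exists (Num.Def.archi_bound (C / (e / 2))).+1 => // n /= Hn.
have n0 : (0 < n)%N by apply: leq_trans Hn.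
have np : 0 < n%:R :> R by rewrite ltr0n.
have mp : 0 < m%:R :> R by rewrite ltr0n.
have Lun : inf E <= u n by apply: (ge_inf hlb); exists n.
rewrite distrC ger0_norm ?subr_ge0 //.
have h1 : v n <= (n %/ m)%:R * v m + C.
  rewrite {1}(divn_eq n m); apply: le_trans (v_dec _ _ m0) _.
  by rewrite lerD2l HC // ltn_pmod.
have h2 : (n %/ m)%:R * v m <= n%:R / m%:R * v m.
  apply: ler_wpM2r => //; rewrite ler_pdivlMr // -natrM ler_nat; exact: leq_divM.
have h3 : u n <= v m / m%:R + C / n%:R.
  have -> : v m / m%:R + C / n%:R = (n%:R / m%:R * v m + C) / n%:R.
    field; by rewrite -?lt0r ?gt_eqF.
  rewrite /u ler_pM2r ?invr_gt0 //; apply: le_trans h1 _; by rewrite lerD2r.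
have h4 : C / n%:R < e / 2.
  rewrite ltr_pdivrMr //.
  have : C / (e / 2) < n%:R.
    apply: lt_le_trans HN _; rewrite ler_nat; exact: ltnW.
  by rewrite ltr_pdivrMr // mulrC.
move: Hm; rewrite /u => Hm; move: h3; rewrite /u => h3.
lra.
Qed.

End Fekete.

Definition good X U (F : X -> U -> set X) (Q : set X) (cA : seq (set X)) (G : set X -> U) : Prop :=
  (forall A, List.In A cA -> exists B, Dset F cA G A B) /\
  (forall A, List.In A cA -> A `<=` Q) /\
  (Q `<=` \bigcup_(A in inA cA) A) /\
  (forall A, List.In A cA -> Fset F A (G A) `<=` Q) /\
  (forall A, List.In A cA -> exists p, A p /\ forall B, List.In B cA -> B p -> B = A) /\
  (forall A B, List.In A cA -> Dset F cA G A B ->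
     exists x, [/\ Fset F A (G A) x, B x & forall C, List.In C cA -> C x -> C = B]).

Section Good.
Variables (X U : Type) (F : X -> U -> set X) (Q : set X) (cA : seq (set X)) (G : set X -> U).

Lemma good_r : good F Q cA G -> cA <> [::] ->
  forall m, r_inv F Q cA G m.+1 = (size cA * maxZ F cA G m)%N.
Proof. move=> [h1 [h2 [h3 [h4 [h5 h6]]]]] ne m; exact: r_inv_eq h1 h2 h3 h4 h5 h6 m ne. Qed.

Lemma good_pos : good F Q cA G -> cA <> [::] ->
  forall n, (0 < n)%N -> (0 < r_inv F Q cA G n)%N.
Proof.
move=> g ne [//|m] _; rewrite good_r // muln_gt0; apply/andP; split.
  by case: (cA) ne.
by case: g => h1 _; exact: maxZ_pos.
Qed.

Lemma good_sub : good F Q cA G -> cA <> [::] ->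
  forall n m, (0 < n)%N -> (0 < m)%N ->
  (r_inv F Q cA G (n + m) <= r_inv F Q cA G n * r_inv F Q cA G m)%N.
Proof.
move=> g ne [//|a] [//|b] _ _; rewrite addSn !good_r //.
apply: leq_trans (leq_mul (leqnn (size cA))
   (leq_trans (maxZ_sub F cA G a b.+1) (leq_mul (leqnn _) (maxZ_S F cA G b)))) _.
apply: eq_leq; ring.
Qed.

End Good.

Lemma cvg_h (R : realType) (s : nat -> nat) :
  (forall n, (0 < n)%N -> (0 < s n)%N) ->
  (forall n m, (0 < n)%N -> (0 < m)%N -> (s (n + m) <= s n * s m)%N) ->
  cvgn ((fun n => (ln ((s n)%:R : R) / ln 2 / n%:R)%R) : R^nat).
Proof.
move=> spos ssub.
have ln2 : (0 < ln (2 : R))%R by rewrite ln_gt0 // ltr1n.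
apply: (@fekete R (fun n => ln ((s n)%:R : R) / ln 2)%R).
- move=> n; apply: divr_ge0; last exact: ltW.
  have [->|sn] := eqVneq (s n) 0%N; first by rewrite ln0.
  by apply: ln_ge0; rewrite ler1n lt0n sn.
- move=> n m n0 m0; rewrite -mulrDl ler_pM2r ?invr_gt0 //.
  rewrite -lnM ?posrE ?ltr0n ?spos // ler_ln ?posrE ?ltr0n ?muln_gt0 ?spos //.
  - by rewrite -natrM ler_nat ssub.
  - by rewrite addn_gt0 n0.
  - by rewrite mulr_gt0 // ltr0n spos.
Qed.

Lemma h_le (R : realType) (s s' : nat -> nat) :
  (forall n, (0 < n)%N -> (0 < s n)%N) ->
  (forall n m, (0 < n)%N -> (0 < m)%N -> (s (n + m) <= s n * s m)%N) ->
  (forall n, (0 < n)%N -> (0 < s' n)%N) ->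
  (forall n m, (0 < n)%N -> (0 < m)%N -> (s' (n + m) <= s' n * s' m)%N) ->
  (forall n, (0 < n)%N -> (s' n <= s n)%N) ->
  (limn ((fun n => (ln ((s' n)%:R : R) / ln 2 / n%:R)%R) : R^nat) <=
   limn ((fun n => (ln ((s n)%:R : R) / ln 2 / n%:R)%R) : R^nat))%R.
Proof.
move=> sp ss sp' ss' sle.
have ln2 : (0 < ln (2 : R))%R by rewrite ln_gt0 // ltr1n.
apply: ler_lim; [exact: cvg_h|exact: cvg_h|].
exists 1%N => // n /= n1.
rewrite ler_pM2r ?invr_gt0 ?ltr0n // ler_pM2r ?invr_gt0 //.
by rewrite ler_ln ?posrE ?ltr0n ?sp ?sp' // ler_nat sle.
Qed.

Section Construct.
Variables (X U : Type) (F : X -> U -> set X).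
Hypothesis HF : forall x u, F x u !=set0.
Variables (Q : set X) (cA : seq (set X)) (G : set X -> U).
Hypothesis HAG : quasi_invariant_partition F Q cA G.

Definition cpick (x : X) : set X := xget set0 [set A | List.In A cA /\ A x].
Definition fA (A : set X) : set X := [set x | A x /\ cpick x = A].
Definition cA' := map fA cA.
Definition G' (B : set X) : U := G (xget set0 [set A | List.In A cA /\ fA A = B]).

Lemma qpriv A : List.In A cA -> exists p, A p /\ forall B, List.In B cA -> B p -> B = A.
Proof.
case: HAG => _ H2 _ HA; have [p [Ap Hp]] := H2 A HA.
exists p; split => // B HB Bp; apply: NNPP => BA; apply: Hp; by exists B.
Qed.

Lemma cpickP x A : List.In A cA -> A x -> List.In (cpick x) cA /\ cpick x x.
Proof.
move=> HA Ax.
exact: (xgetPex set0 (P := [set A | List.In A cA /\ A x]) (ex_intro _ A (conj HA Ax))).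
Qed.

Lemma fA_sub A : fA A `<=` A.
Proof. by move=> x []. Qed.

Lemma fA_priv A p : List.In A cA -> A p -> (forall B, List.In B cA -> B p -> B = A) -> fA A p.
Proof. move=> HA Ap Hp; split => //; have [h1 h2] := cpickP HA Ap; exact: Hp. Qed.

Lemma fA_disj A B x : fA A x -> fA B x -> A = B.
Proof. by move=> [_ <-] [_ <-]. Qed.

Lemma fA_inj A B : List.In A cA -> List.In B cA -> fA A = fA B -> A = B.
Proof.
move=> HA HB E; have [p [Ap Hp]] := qpriv HA.
have := fA_priv HA Ap Hp; rewrite E => /fA_sub Bp.
by rewrite (Hp B HB Bp).
Qed.

Lemma G'_f A : List.In A cA -> G' (fA A) = G A.
Proof.
move=> HA; rewrite /G'.
have [h1 h2] := xgetPex set0 (P := [set A0 | List.In A0 cA /\ fA A0 = fA A])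
  (ex_intro _ A (conj HA erefl)).
by rewrite (fA_inj h1 HA h2).
Qed.

Lemma Fset_sub A B u : A `<=` B -> Fset F A u `<=` Fset F B u.
Proof. by move=> AB y [x Ax Fy]; exists x => //; apply: AB. Qed.

Lemma D'_D A B : List.In A cA -> List.In B cA ->
  Dset F cA' G' (fA A) (fA B) -> Dset F cA G A B.
Proof.
move=> HA HB [_ [y [Fy By]]]; split => //.
rewrite G'_f // in Fy.
exists y; split; [exact: Fset_sub (@fA_sub A) _ Fy | exact: fA_sub].
Qed.

Lemma good_cA : good F Q cA G.
Proof.
case: HAG => [[_ hsub hcov hFQ] h2 h3].
split; [|split; [done|split; [done|split; [done|split; [exact: qpriv|]]]]].
- move=> A HA; have [p [Ap _]] := qpriv HA.
  have [y Fy] := HF p (G A).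
  have FAy : Fset F A (G A) y by exists p.
  have [B HB By] := hcov y (hFQ A HA y FAy).
  by exists B; split => //; exists y.
- move=> A B HA DB; have [x [Fx [Bx Hx]]] := h3 A B HA DB.
  exists x; split => // C HC Cx; apply: NNPP => CB; apply: Hx; exists C => //.
  by split => //; split => //; exists x.
Qed.

Lemma good_cA' : good F Q cA' G'.
Proof.
case: HAG => [[_ hsub hcov hFQ] h2 h3].
split; [|split; [|split; [|split; [|split]]]].
- move=> A' HA'; have [A [HA <-]] := In_map_inv HA'.
  have [p [Ap Hp]] := qpriv HA.
  have [y Fy] := HF p (G A).
  have FAy : Fset F (fA A) (G' (fA A)) y by rewrite G'_f //; exists p => //; exact: fA_priv.
  have Qy : Q y by apply: (hFQ A HA); rewrite G'_f // in FAy; exact: Fset_sub (@fA_sub A) _ FAy.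
  have [B HB By] := hcov y Qy.
  have [hc1 hc2] := cpickP HB By.
  exists (fA (cpick y)); split; first exact: In_map_f.
  by exists y; split.
- move=> A' HA'; have [A [HA <-]] := In_map_inv HA'.
  by move=> x /fA_sub Ax; exact: hsub A HA x Ax.
- move=> x Qx; have [B HB Bx] := hcov x Qx.
  have [hp1 hp2] := cpickP HB Bx.
  by exists (fA (cpick x)); [exact: In_map_f|split].
- move=> A' HA'; have [A [HA <-]] := In_map_inv HA'.
  rewrite G'_f //; apply: subset_trans (hFQ A HA); exact: Fset_sub (@fA_sub A).
- move=> A' HA'; have [A [HA <-]] := In_map_inv HA'.
  have [p [Ap Hp]] := qpriv HA.
  exists p; split; first exact: fA_priv.
  move=> B' HB' Bp; have [B [HB EB]] := In_map_inv HB'; subst B'.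
  by rewrite (fA_disj Bp (fA_priv HA Ap Hp)).
- move=> A' B' HA' [HB' [x [Fx Bx]]].
  exists x; split => // C' HC' Cx.
  have [B [HB EB]] := In_map_inv HB'; subst B'.
  have [C [HC EC]] := In_map_inv HC'; subst C'.
  by rewrite (fA_disj Cx Bx).
Qed.

Lemma part_cA' : invariant_partition F Q cA' G'.
Proof.
have [_ [hs [hc [hf _]]]] := good_cA'.
case: HAG => [[hnd _ _ _] _ _].
split.
- split => //; apply: NoDup_map_inj => // A B HA HB; exact: fA_inj.
- move=> A' HA'; have [A [HA <-]] := In_map_inv HA'.
  have [p [Ap Hp]] := qpriv HA; exists p; exact: fA_priv.
- move=> A' B' HA' HB' neq.
  have [A [HA EA]] := In_map_inv HA'; subst A'.
  have [B [HB EB]] := In_map_inv HB'; subst B'.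
  rewrite -subset0 => x [Ax Bx]; apply: neq; by rewrite (fA_disj Ax Bx).
Qed.

Lemma Z_le j A : List.In A cA -> (Z F cA' G' j (fA A) <= Z F cA G j A)%N.
Proof.
elim: j A => [//|j IH] A HA /=; apply: leq_mul.
  rewrite /deg /cardP /cA' filter_map size_map; apply: size_filter_sub => B HB.
  rewrite /preim /= => /asboolP DB; apply/asboolP; exact: D'_D.
apply: maxl_le => B' HB' DB'; have [B [HB EB]] := In_map_inv HB'; subst B'.
apply: leq_trans (IH B HB) _; apply: (maxl_ge (Z F cA G j) HB); exact: D'_D HA HB DB'.
Qed.

Lemma maxZ_le j : (maxZ F cA' G' j <= maxZ F cA G j)%N.
Proof.
apply: maxl_le => B' HB' _; have [B [HB EB]] := In_map_inv HB'; subst B'.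
apply: leq_trans (Z_le j HB) _; exact: maxl_ge HB I.
Qed.

Lemma main_core (R : realType) :
  exists (cA2 : seq (set X)) (G2 : set X -> U),
    [/\ invariant_partition F Q cA2 G2,
        size cA = size cA2 &
        (h_inv F Q R cA2 G2 <= h_inv F Q R cA G)%R].
Proof.
case E: cA => [|A0 l].
  exists [::], G; split => //.
  have := HAG; rewrite E => -[hc _ _]; split => //.
rewrite -E.
exists cA', G'; split; [exact: part_cA'|by rewrite size_map|].
have ne : cA <> [::] by rewrite E.
have ne' : cA' <> [::] by rewrite /cA' E.
apply: h_le.
- exact: good_pos good_cA ne.
- exact: good_sub good_cA ne.
- exact: good_pos good_cA' ne'.
- exact: good_sub good_cA' ne'.
- move=> [//|m] _; rewrite (good_r good_cA) // (good_r good_cA') //.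
  by rewrite size_map leq_mul2l maxZ_le orbT.
Qed.

End Construct.

Local Open Scope ring_scope.

Theorem corollary3p4 (R : realType) (X U : Type) (F : X -> U -> set X)
  (HF : forall x u, F x u !=set0) (Q : set X)
  (HQ : controlled_invariant F Q)
  (cA : seq (set X)) (G : set X -> U)
  (HAG : quasi_invariant_partition F Q cA G) :
  exists (cA' : seq (set X)) (G' : set X -> U),
    [/\ invariant_partition F Q cA' G',
        size cA = size cA' &
        h_inv F Q R cA' G' <= h_inv F Q R cA G].
Proof. have := main_core HF HAG R. exact. Qed.
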